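(* Consider the constant-altitude cruise minimum-fuel optimal control problem $$\min_{v(\cdot)\in[v_{\min},v_{\max}],\ \chi(\cdot),\ t_f}\ \mathcal J:=-m(t_f)$$ subject to $$\frac{dx}{dt}=v\cos\chi+W_x(x,y)=:F_x,\quad \frac{dy}{dt}=v\sin\chi+W_y(x,y)=:F_y,\quad \frac{dm}{dt}=-D(m,v)\,C_s(v)=:F_m,$$ with $x(0),y(0),m(0)$ and $x(t_f),y(t_f)$ prescribed and $t_f$ free, where $W_x,W_y$ are wind components, $D>0$ is the drag and $C_s>0$ the specific fuel consumption. Let $\mathcal H=\lambda_xF_x+\lambda_yF_y+\lambda_mF_m$ be the Hamiltonian, with costates satisfying $\frac{d\lambda}{dt}=-\frac{\partial\mathcal H}{\partial X}$ ($X=(x,y,m)$), $\lambda_m(t_f)=-1$, $\mathcal H(t)\equiv 0$ on $[0,t_f]$, and the heading satisfying $\tan\chi(t)=\lambda_y/\lambda_x$. Assume: (i) $C_s(v)>0$ is non-decreasing in $v$ and $D(m,v)>0$ is non-decreasing in both $v$ and $m$; (ii) $F_{m,vv}:=\frac{\partial^2F_m}{\partial v^2}<0$; (iii) for each $t\in[0,t_f]$ the first-order condition $\frac{\partial\mathcal H}{\partial v}(t)=0$ can be written as $G(m(t),v^*(t),W_x,W_y,\bar h)=0$ ($\bar h$ the cruise altitude), this equation implicitly defines a unique mapping $v^*(t)=f(m(t),W_x,W_y,\bar h)$, and the resulting control satisfies $v_{\min}<v^*(t)<v_{\max}$ for all $t\in[0,t_f]$. Then the minimizer $v^*(t)$ of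 the Hamiltonian satisfies $v_{\min}<v^*(t)<v_{\max}$ for all $t\in[0,t_f]$, and the Hamiltonian is strictly convex in $v$ at $v^*(t)$: $\frac{\partial^2\mathcal H}{\partial v^2}(t)>0$ at every $t$ where $\frac{\partial\mathcal H}{\partial v}(t)=0$, so the stationary point is a local minimum of $\mathcal H$ in $v$.
   Context: Point-mass cruise at constant altitude $\bar h$ with airspeed $v$ treated as a control (quasi-steady flight, thrust equal to drag) and heading angle $\chi$ as a second control. *)

(* Defs.v *)
From Stdlib Require Import Reals.
From Coquelicot Require Import Coquelicot.
Open Scope R_scope.

Definition Fm (D : R -> R -> R) (Cs : R -> R) (m v : R) : R := - (D m v * Cs v).

Definition Ham (Wx Wy : R -> R -> R) (D : R -> R -> R) (Cs : R -> R)
  (lx ly lm x y m chi v : R) : R :=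
  lx * (v * cos chi + Wx x y) + ly * (v * sin chi + Wy x y) + lm * Fm D Cs m v.

(* Main.v *)
Require Import Defs.
From Stdlib Require Import Reals Lra Psatz.
From Coquelicot Require Import Coquelicot.
Open Scope R_scope.


Lemma cont_of_derive (f : R -> R) x l : is_derive f x l -> continuity_pt f x.
Proof.
  intro H. apply continuity_pt_filterlim. apply (ex_derive_continuous f x). exists l; exact H.
Qed.

Lemma lm_neg (tf : R) (lm A : R -> R) :
  0 < tf -> (forall t, 0<=t<=tf -> is_derive lm t (-(lm t * A t))) -> lm tf = -1 ->
  (forall t, 0<=t<=tf -> filterlim A (within (fun s => 0<=s<=tf) (locally t)) (locally (A t))) ->
  forall t, 0<=t<=tf -> lm t < 0.
Proof.
  intros Htf Hd Hend Hc.
  set (cl := fun s => Rmax 0 (Rmin tf s)).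
  assert (Hcl : forall s, 0 <= cl s <= tf).
  { intro s; unfold cl; split.
    - apply Rmax_l.
    - apply Rmax_lub; [lra| apply Rmin_l]. }
  assert (Hclid : forall s, 0 <= s <= tf -> cl s = s).
  { intros s Hs; unfold cl. rewrite Rmin_right by lra. rewrite Rmax_right by lra. reflexivity. }
  assert (Hcld : forall s c, 0 <= c <= tf -> Rabs (cl s - c) <= Rabs (s - c)).
  { intros s c Hc0; unfold cl.
    destruct (Rle_dec tf s).
    - rewrite Rmin_left by lra. rewrite Rmax_right by lra.
      rewrite !Rabs_right by lra. lra.
    - rewrite Rmin_right by lra. destruct (Rle_dec 0 s).
      + rewrite Rmax_right by lra. lra.
      + rewrite Rmax_left by lra. rewrite !Rabs_left1 by lra. lra. }
  set (B := fun s => - A (cl s)).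
  assert (HB : forall c, 0 <= c <= tf -> continuity_pt B c).
  { intros c Hc0. unfold B. apply continuity_pt_opp.
    apply continuity_pt_filterlim.
    rewrite (Hclid c Hc0).
    intros P HP. specialize (Hc c Hc0 P HP). destruct Hc as [eps Heps].
    exists eps. intros y Hy. apply Heps; [|apply Hcl].
    change (Rabs (cl y - c) < eps).
    change (Rabs (y - c) < eps) in Hy.
    specialize (Hcld y c Hc0). lra. }
  destruct (continuity_ab_maj B 0 tf (Rlt_le _ _ Htf) HB) as [M [HM _]].
  set (K := B M).
  assert (HK : forall s, 0 <= s <= tf -> - A s <= K).
  { intros s Hs. pose proof (HM s Hs) as H. unfold K, B in *. rewrite (Hclid s Hs) in H. exact H. }
  set (g := fun s => lm s ^ 2 * exp (- (2 * K) * s)).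
  set (dg := fun s => 2 * lm s * (-(lm s * A s)) * exp (- (2*K) * s)
                      + lm s ^ 2 * (- (2 * K) * exp (- (2*K) * s))).
  assert (Hg : forall s, 0 <= s <= tf -> is_derive g s (dg s)).
  { intros s Hs. unfold g, dg.
    pose proof (Hd s Hs) as H.
    apply (is_derive_mult (fun s => lm s ^ 2) (fun s => exp (- (2*K) * s))).
    - apply is_derive_ext with (f := fun s => lm s * lm s).
      { intro; simpl; ring. }
      replace (2 * lm s * - (lm s * A s)) with ((- (lm s * A s)) * lm s + lm s * (- (lm s * A s))) by ring.
      apply (is_derive_mult lm lm); auto.
      intros; apply Rmult_comm.
    - apply (is_derive_comp exp (fun s => - (2*K) * s)).
      + apply is_derive_Reals. apply derivable_pt_lim_exp.
      + auto_derive; [exact I| ring].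
    - intros; apply Rmult_comm. }
  assert (Hnz : forall t0, 0 <= t0 <= tf -> lm t0 <> 0).
  { intros t0 Ht0 Hz.
    destruct (MVT_gen g t0 tf dg) as [c [Hc1 Hc2]].
    - intros s Hs. apply Hg. rewrite Rmin_left in Hs by lra. rewrite Rmax_right in Hs by lra. lra.
    - intros s Hs. rewrite Rmin_left in Hs by lra. rewrite Rmax_right in Hs by lra.
      apply (cont_of_derive _ _ _ (Hg s ltac:(lra))).
    - rewrite Rmin_left in Hc1 by lra. rewrite Rmax_right in Hc1 by lra.
      assert (Hcc : 0 <= c <= tf) by lra.
      pose proof (HK c Hcc).
      assert (dg c <= 0).
      { unfold dg. pose proof (exp_pos (- (2*K) * c)).
        assert (0 <= lm c ^ 2) by (simpl; nra).
        assert (0 <= (A c + K) * (lm c ^2 * exp (- (2 * K) * c))) by (apply Rmult_le_pos; [lra|nra]).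
        simpl in *. nra. }
      unfold g in Hc2. rewrite Hz, Hend in Hc2. pose proof (exp_pos (- (2*K) * tf)).
      simpl in Hc2. nra. }
  intros t Ht.
  destruct (Rlt_le_dec (lm t) 0) as [|Hge]; [assumption|].
  exfalso.
  assert (Hne := Hnz t Ht).
  assert (t < tf) by (destruct (Req_dec t tf); [subst; lra|lra]).
  destruct (Ranalysis5.IVT_interv (fun s => - lm s) t tf) as [z [Hz1 Hz2]].
  - intros a Ha. apply continuity_pt_opp. apply (cont_of_derive _ _ _ (Hd a ltac:(lra))).
  - assumption.
  - lra.
  - lra.
  - apply (Hnz z); [lra|]. lra.
Qed.

Theorem theorem2
  (hbar vmin vmax x0 y0 m0 xf yf tf : R)
  (Wx Wy : R -> R -> R) (D : R -> R -> R) (Cs : R -> R)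
  (G : R -> R -> R -> R -> R -> R) (f : R -> R -> R -> R -> R)
  (x y m v chi lx ly lm : R -> R) :
  0 < tf ->
  (* boundary conditions *)
  x 0 = x0 -> y 0 = y0 -> m 0 = m0 -> x tf = xf -> y tf = yf ->
  (* state equations *)
  (forall t, 0 <= t <= tf -> is_derive x t (v t * cos (chi t) + Wx (x t) (y t))) ->
  (forall t, 0 <= t <= tf -> is_derive y t (v t * sin (chi t) + Wy (x t) (y t))) ->
  (forall t, 0 <= t <= tf -> is_derive m t (Fm D Cs (m t) (v t))) ->
  (* costate equations  dlambda/dt = - dH/dX *)
  (forall t, 0 <= t <= tf -> is_derive lx t
     (- (lx t * Derive (fun a => Wx a (y t)) (x t)
         + ly t * Derive (fun a => Wy a (y t)) (x t)))) ->
  (forall t, 0 <= t <= tf -> is_derive ly t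
     (- (lx t * Derive (fun b => Wx (x t) b) (y t)
         + ly t * Derive (fun b => Wy (x t) b) (y t)))) ->
  (forall t, 0 <= t <= tf -> is_derive lm t
     (- (lm t * Derive (fun a => Fm D Cs a (v t)) (m t)))) ->
  lm tf = -1 ->
  (* H(t) = 0 on [0,tf] *)
  (forall t, 0 <= t <= tf ->
     Ham Wx Wy D Cs (lx t) (ly t) (lm t) (x t) (y t) (m t) (chi t) (v t) = 0) ->
  (* heading law  tan chi = lambda_y / lambda_x *)
  (forall t, 0 <= t <= tf -> tan (chi t) = ly t / lx t) ->
  (* regularity (implicit in the paper) *)
  (forall a b, ex_derive (fun a' => Wx a' b) a) ->
  (forall a b, ex_derive (fun a' => Wy a' b) a) ->
  (forall a b, ex_derive (fun b' => Wx a b') b) ->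
  (forall a b, ex_derive (fun b' => Wy a b') b) ->
  (forall mu u, ex_derive (fun a => D a u) mu) ->
  (forall mu u, ex_derive (Fm D Cs mu) u) ->
  (forall mu u, ex_derive (Derive (Fm D Cs mu)) u) ->
  (forall t, 0 <= t <= tf ->
     filterlim (fun s => Derive (fun a => Fm D Cs a (v s)) (m s))
       (within (fun s => 0 <= s <= tf) (locally t))
       (locally (Derive (fun a => Fm D Cs a (v t)) (m t)))) ->
  (* (i) positivity and monotonicity *)
  (forall u, 0 < Cs u) ->
  (forall u1 u2, u1 <= u2 -> Cs u1 <= Cs u2) ->
  (forall mu u, 0 < D mu u) ->
  (forall mu u1 u2, u1 <= u2 -> D mu u1 <= D mu u2) ->
  (forall mu1 mu2 u, mu1 <= mu2 -> D mu1 u <= D mu2 u) ->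
  (* (ii) F_{m,vv} < 0 *)
  (forall mu u, Derive (Derive (Fm D Cs mu)) u < 0) ->
  (* (iii) dH/dv = 0 is G(m,v,Wx,Wy,hbar) = 0, uniquely solved by v = f(m,Wx,Wy,hbar),
     and the resulting control lies strictly inside the bounds *)
  (forall t, 0 <= t <= tf ->
     (forall w,
        Derive (Ham Wx Wy D Cs (lx t) (ly t) (lm t) (x t) (y t) (m t) (chi t)) w = 0
        <-> G (m t) w (Wx (x t) (y t)) (Wy (x t) (y t)) hbar = 0) /\
     (forall w,
        G (m t) w (Wx (x t) (y t)) (Wy (x t) (y t)) hbar = 0
        <-> w = f (m t) (Wx (x t) (y t)) (Wy (x t) (y t)) hbar) /\
     v t = f (m t) (Wx (x t) (y t)) (Wy (x t) (y t)) hbar /\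
     vmin < v t < vmax) ->
  forall t, 0 <= t <= tf ->
    vmin < v t < vmax /\
    (Derive (Ham Wx Wy D Cs (lx t) (ly t) (lm t) (x t) (y t) (m t) (chi t)) (v t) = 0 ->
       0 < Derive (Derive (Ham Wx Wy D Cs (lx t) (ly t) (lm t) (x t) (y t) (m t) (chi t))) (v t)
       /\ exists eps, 0 < eps /\ forall w, Rabs (w - v t) < eps ->
            Ham Wx Wy D Cs (lx t) (ly t) (lm t) (x t) (y t) (m t) (chi t) (v t)
            <= Ham Wx Wy D Cs (lx t) (ly t) (lm t) (x t) (y t) (m t) (chi t) w).
Proof.
  intros Htf _ _ _ _ _ _ _ _ _ _ Hlm Hend _ _ _ _ _ _ _ HexF HexF2 HcA _ _ _ _ _ HF2 H3 t Ht.
  destruct (H3 t Ht) as [_ [_ [_ Hb]]].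
  split; [exact Hb|].
  intros Hstat.
  assert (HL : lm t < 0).
  { exact (lm_neg tf lm (fun s => Derive (fun a => Fm D Cs a (v s)) (m s)) Htf Hlm Hend HcA t Ht). }
  set (h := Ham Wx Wy D Cs (lx t) (ly t) (lm t) (x t) (y t) (m t) (chi t)) in *.
  set (F := Fm D Cs (m t)).
  set (c1 := lx t * cos (chi t) + ly t * sin (chi t)).
  set (L := lm t) in *.
  assert (Hh : forall w, is_derive h w (c1 + L * Derive F w)).
  { intro w. unfold h, Ham, c1.
    assert (HF := Derive_correct F w (HexF (m t) w)).
    assert (Hc : is_derive (fun w => lx t * (w * cos (chi t) + Wx (x t) (y t)) +
                   ly t * (w * sin (chi t) + Wy (x t) (y t))) w (lx t * cos (chi t) + ly t * sin (chi t))).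
    { auto_derive; [exact I| ring]. }
    apply (is_derive_plus _ (fun w => lm t * Fm D Cs (m t) w)); [exact Hc|].
    apply (is_derive_scal (Fm D Cs (m t))). exact HF. }
  assert (Dh : forall w, Derive h w = c1 + L * Derive F w).
  { intro w. apply is_derive_unique. apply Hh. }
  assert (Hh2 : forall w, is_derive (Derive h) w (L * Derive (Derive F) w)).
  { intro w. apply is_derive_ext with (f := fun w => c1 + L * Derive F w).
    { intro; symmetry; apply Dh. }
    replace (L * Derive (Derive F) w) with (0 + L * Derive (Derive F) w) by ring.
    apply (is_derive_plus (fun _ => c1)). exact (is_derive_const (K := R_AbsRing) c1 w).
    apply (is_derive_scal (Derive F)). apply Derive_correct. apply HexF2. }
  assert (Dh2 : forall w, Derive (Derive h) w = L * Derive (Derive F) w).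
  { intro w. apply is_derive_unique. apply Hh2. }
  assert (Hpos : forall w, 0 < Derive (Derive h) w).
  { intro w. rewrite Dh2. pose proof (HF2 (m t) w). fold F in H. nra. }
  split; [apply Hpos|].
  exists 1. split; [lra|]. intros w _.
  destruct (MVT_gen h (v t) w (Derive h)) as [c [Hc1 Hc2]].
  - intros s _. apply Derive_correct. eexists; apply Hh.
  - intros s _. apply (cont_of_derive _ _ _ (Hh s)).
  - destruct (MVT_gen (Derive h) (v t) c (Derive (Derive h))) as [d [Hd1 Hd2]].
    + intros s _. rewrite Dh2. apply Hh2.
    + intros s _. apply (cont_of_derive _ _ _ (Hh2 s)).
    + rewrite Hstat in Hd2. pose proof (Hpos d).
      assert (0 <= (c - v t) * (w - v t)).
      { destruct (Rle_dec (v t) w).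
        - rewrite Rmin_left in Hc1 by lra. rewrite Rmax_right in Hc1 by lra. nra.
        - rewrite Rmin_right in Hc1 by lra. rewrite Rmax_left in Hc1 by lra. nra. }
      assert (Derive h c = Derive (Derive h) d * (c - v t)) by lra.
      rewrite H1 in Hc2. nra.
Qed.
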